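(* Let $G$ be a finite group, and let $\{g_1,\dots,g_k\}$ be a complete set of representatives of the conjugacy classes of $G$. Then the following are equivalent: (1) $G$ is a rational group. (2) The permutation characters $\{1_{\langle g_i\rangle}^G : i=1,\dots,k\}$ separate conjugacy classes of $G$. (3) $G$ has a finite collection $\mathcal{H}$ of subgroups such that the permutation characters $\{1_H^G : H\in\mathcal{H}\}$ separate conjugacy classes of $G$. (4) $G$ has a permutation character which separates the conjugacy classes of $G$; equivalently, $G$ has an action on a finite set $\Omega$ such that any two elements of $G$ fixing the same number of points of $\Omega$ are conjugate in $G$. *)

(* Defs.v *)
From HB Require Import structures.
From mathcomp Require Import all_boot all_order all_algebra all_fingroup all_solvable all_field all_character.
Set Implicit Arguments. Unset Strict Implicit. Unset Printing Implicit Defensive.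
Import GRing.Theory Num.Theory.
Local Open Scope ring_scope.
Local Open Scope group_scope.

(* A finite group G is rational iff every (irreducible, hence every) complex
   character of G takes only rational values. *)
Definition rational_group (gT : finGroupType) (G : {group gT}) : Prop :=
  forall (i : Iirr G) (x : gT), ('chi[G]_i x \in Crat)%R.

Definition perm_char (gT : finGroupType) (G H : {group gT}) : 'CF(G) :=
  'Ind[G, H] (1%R : 'CF(H)).

Definition separates_classes (gT : finGroupType) (G : {group gT})
    (S : seq 'CF(G)) : Prop :=
  forall x y, x \in G -> y \in G ->
    (forall phi, phi \in S -> phi x = phi y) -> y \in x ^: G.

(* Main.v *)
Require Import Defs.
From HB Require Import structures.
From mathcomp Require Import all_boot all_order all_algebra all_fingroup all_solvable all_field all_character.
Set Implicit Arguments. Unset Strict Implicit. Unset Printing Implicit Defensive.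
Import GRing.Theory Num.Theory.
Local Open Scope group_scope.

Lemma aut_char_exp (gT : finGroupType) (G : {group gT}) (chi : 'CF(G))
  (Nchi : chi \is a character) x k (nu : {rmorphism algC -> algC}) :
  x \in G -> (forall z : algC, (z ^+ #[x] = 1)%R -> nu z = (z ^+ k)%R) ->
  nu (chi x) = chi (x ^+ k).
Proof.
move=> Gx Hnu.
have sCG : <[x]> \subset G by rewrite cycle_subG.
have Cx : x \in <[x]> by exact: cycle_id.
have CxK : x ^+ k \in <[x]> by rewrite mem_cycle.
rewrite -(cfResE chi sCG Cx) -(cfResE chi sCG CxK).
have [r ->] := char_sum_irr (cfRes_char <[x]>%G Nchi).
rewrite !sum_cfunE rmorph_sum; apply: eq_bigr => i _.
have Li : (('chi_i)%R : 'CF(<[x]>%G)) \is a linear_char by rewrite irr_cyclic_lin ?cycle_cyclic.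
rewrite (lin_charX Li) // Hnu // -(lin_charX Li) // expg_order.
exact: lin_char1.
Qed.

Lemma irr_sep (gT : finGroupType) (G : {group gT}) x y : x \in G -> y \in G ->
  (forall i : Iirr G, ('chi_i)%R x = ('chi_i)%R y) -> y \in x ^: G.
Proof.
move=> Gx Gy H.
have nG := class_normal Gx.
have E := cfun_sum_cfdot (('1_(x ^: G))%R : 'CF(G)).
have : (('1_(x ^: G))%R : 'CF(G)) y = (('1_(x ^: G))%R : 'CF(G)) x.
  by rewrite E !sum_cfunE; apply: eq_bigr => i _; rewrite !cfunE H.
rewrite !cfuniE // class_refl.
by case: (y \in _) => //= /eqP; rewrite eq_sym oner_eq0.
Qed.

Definition powclosed (gT : finGroupType) (G : {group gT}) :=
  forall x, x \in G -> forall k, coprime k #[x] -> x ^+ k \in x ^: G.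

Lemma rat_pc (gT : finGroupType) (G : {group gT}) : rational_group G -> powclosed G.
Proof.
move=> rat x Gx k cok; have [nu Hnu] := Qn_aut_exists cok.
apply: irr_sep => //; first by rewrite groupX.
move=> i; rewrite -(aut_char_exp (irr_char i) Gx Hnu) aut_Crat //.
Qed.

Lemma pc_rat (gT : finGroupType) (G : {group gT}) : powclosed G -> rational_group G.
Proof.
move=> pc i x.
have [Gx|nGx] := boolP (x \in G); last by rewrite cfun0 ?rpred0.
have [Qn galQn [QnC gQnC [w [pr_w _] QnG]]] := group_num_field_exists G.
have [a Da] := QnG _ G _ (irr_char i) x (order_dvdG Gx).
have [z prz] := C_prim_root_exists (order_gt0 x).
suff: a \in 1%VS.
  by move/vlineP => [q Dq]; rewrite -Da Dq rmorphZ_num rmorph1 mulr1 Crat_rat.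
have /galois_fixedField <- := galQn.
apply/fixedFieldP; first exact: memvf.
move=> nu Gnu; have [nuC DnuC] := gQnC nu.
apply: (fmorph_inj QnC); rewrite DnuC Da.
have prnz : (#[x].-primitive_root (nuC z))%R by rewrite fmorph_primitive_root.
have [k Dk] := prim_rootP prz (prim_expr_order prnz).
have cok : coprime k #[x] by rewrite -(prim_root_exp_coprime k prz) -Dk.
have Hnu : forall u : algC, (u ^+ #[x] = 1)%R -> nuC u = (u ^+ k)%R.
  move=> u /(prim_rootP prz) [m ->].
  by rewrite rmorphXn /= Dk exprAC.
rewrite (aut_char_exp (irr_char i) Gx Hnu).
have /imsetP[g Gg ->] := pc x Gx k cok.
by rewrite cfunJ.
Qed.

Lemma conj_core (gT : finGroupType) (G : {group gT}) x y t s :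
  powclosed G -> x \in G -> y \in G -> t \in G -> y ^ t \in <[x]> ->
  s \in G -> x ^ s \in <[y]> -> y \in x ^: G.
Proof.
move=> pc Gx Gy Gt yt Gs xs.
have d1 : #[y] %| #[x] by rewrite -(orderJ y t) orderE order_dvdG.
have d2 : #[x] %| #[y] by rewrite -(orderJ x s) [#[y]]orderE order_dvdG.
have eo : #[x] = #[y] by apply/eqP; rewrite eqn_dvd d1 d2.
have [k Dk] := cycleP _ _ yt.
have cok : coprime #[x] k.
  rewrite -generator_coprime /generator eq_sym eqEcard cycle_subG mem_cycle /=.
  by rewrite -!orderE -Dk orderJ eo.
have := pc x Gx k; rewrite coprime_sym => /(_ cok).
rewrite -Dk => /imsetP[g Gg Dg].
have -> : y = x ^ (g * t^-1) by rewrite conjgM -Dg conjgK.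
by rewrite memJ_class // groupM ?groupV.
Qed.

Lemma cycleX_cop (gT : finGroupType) (z : gT) k : coprime k #[z] -> <[z ^+ k]> = <[z]>.
Proof.
move=> cok; have : generator <[z]> (z ^+ k) by rewrite generator_coprime coprime_sym.
by move/eqP.
Qed.

Lemma perm_char_pow (gT : finGroupType) (G H : {group gT}) x k :
  H \subset G -> coprime k #[x] -> perm_char G H (x ^+ k) = perm_char G H x.
Proof.
move=> sHG cok; rewrite /perm_char !cfIndE //; congr (_ * _)%R.
apply: eq_bigr => y _; rewrite !cfun1E conjXg -!cycle_subG cycleX_cop //.
by rewrite orderJ.
Qed.

Lemma perm_char_neq0 (gT : finGroupType) (G H : {group gT}) x :
  H \subset G -> (perm_char G H x != 0)%R = [exists y in G, x ^ y \in H].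
Proof.
move=> sHG; rewrite /perm_char cfIndE // mulf_eq0 invr_eq0 negb_or pnatr_eq0.
rewrite -lt0n cardG_gt0 /=.
apply/idP/existsP => [nz | [y /andP[Gy Hy]]].
  apply/existsP; apply: contraNT nz => /existsPn Hn.
  rewrite big1 // => y Gy; rewrite cfun1E.
  by have := Hn y; rewrite Gy /= => /negbTE ->.
rewrite (bigD1 y) //= cfun1E Hy.
apply: lt0r_neq0; apply: ltr_wpDr; last exact: ltr01.
by apply: sumr_ge0 => z _; rewrite cfun1E ler0n.
Qed.
Lemma transv_ex (gT : finGroupType) (G : {group gT}) (R : {set gT}) x :
  is_transversal R (classes G) G -> x \in G -> exists2 g, g \in R & g \in x ^: G.
Proof.
case/and3P => _ _ /forall_inP /(_ (x ^: G)) H Gx.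
have /cards1P[g Dg] := H (mem_classes Gx).
have : g \in R :&: x ^: G by rewrite Dg set11.
by rewrite inE => /andP[]; exists g.
Qed.

Lemma into_cycle (gT : finGroupType) (G : {group gT}) (R : {set gT}) x y :
  is_transversal R (classes G) G -> x \in G -> y \in G ->
  (forall phi, phi \in [seq perm_char G <[g]>%G | g <- enum R] -> phi x = phi y) ->
  exists2 t, t \in G & y ^ t \in <[x]>.
Proof.
move=> hR Gx Gy Hs.
have sRG : R \subset G by case/and3P: hR.
have [g Rg /imsetP[h Gh Dg]] := transv_ex hR Gx.
have sgG : <[g]> \subset G by rewrite cycle_subG (subsetP sRG).
have nz : (perm_char G <[g]>%G x != 0)%R.
  by rewrite perm_char_neq0 //; apply/existsP; exists h; rewrite Gh -Dg cycle_id.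
rewrite Hs ?perm_char_neq0 // in nz; last by apply: map_f; rewrite mem_enum.
case/existsP: nz => t /andP[Gt].
rewrite Dg /= cycleJ mem_conjg -conjgM => yt.
by exists (t * h^-1); rewrite // groupM ?groupV.
Qed.

Lemma imp12 (gT : finGroupType) (G : {group gT}) (R : {set gT}) :
  is_transversal R (classes G) G -> rational_group G ->
  separates_classes [seq perm_char G <[g]>%G | g <- enum R].
Proof.
move=> hR /rat_pc pc x y Gx Gy Hs.
have [t Gt yt] := into_cycle hR Gx Gy Hs.
have [s Gs xs] := into_cycle hR Gy Gx (fun phi P => esym (Hs phi P)).
exact: conj_core pc Gx Gy Gt yt Gs xs.
Qed.

Lemma imp23 (gT : finGroupType) (G : {group gT}) (R : {set gT}) :
  is_transversal R (classes G) G ->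
  separates_classes [seq perm_char G <[g]>%G | g <- enum R] ->
  exists Hs : seq {group gT},
         all (fun H : {group gT} => H \subset G) Hs /\
         separates_classes [seq perm_char G H | H <- Hs].
Proof.
move=> hR Hsep; have sRG : R \subset G by case/and3P: hR.
exists [seq <[g]>%G | g <- enum R]; split; last by rewrite -map_comp.
apply/allP => H /mapP[g gR ->]; rewrite cycle_subG (subsetP sRG) //.
by rewrite -mem_enum.
Qed.

Lemma imp3pc (gT : finGroupType) (G : {group gT}) :
  (exists Hs : seq {group gT},
         all (fun H : {group gT} => H \subset G) Hs /\
         separates_classes [seq perm_char G H | H <- Hs]) -> powclosed G.
Proof.
move=> [Hs [/allP sub Hsep]] x Gx k cok; apply: Hsep => //; first by rewrite groupX.
move=> _ /mapP[H HHs ->]; rewrite perm_char_pow //; exact: sub.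
Qed.

Lemma imp4pc (gT : finGroupType) (G : {group gT}) :
  (exists (T : finType) (to : action G T),
         forall x y, x \in G -> y \in G ->
           #|'Fix_to[x]| = #|'Fix_to[y]| -> y \in x ^: G) -> powclosed G.
Proof.
move=> [T [to Hf]] x Gx k cok; apply: Hf => //; first by rewrite groupX.
by rewrite -!afix_cycle_in ?groupX // cycleX_cop.
Qed.

Section NatStuff.
Local Open Scope nat_scope.
Lemma digits (B : nat) m (a b : nat -> nat) :
  (forall i, a i < B) -> (forall i, b i < B) ->
  \sum_(i < m) B ^ i * a i = \sum_(i < m) B ^ i * b i -> forall i, i < m -> a i = b i.
Proof.
elim: m a b => [|m IH] a b ha hb e i //.
have B0 : 0 < B by apply: leq_ltn_trans (ha 0).
have sh (c : nat -> nat) : \sum_(i < m.+1) B ^ i * c i = c 0 + B * \sum_(i < m) B ^ i * c i.+1.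
  by rewrite big_ord_recl /= expn0 mul1n big_distrr /=; congr (_ + _);
     apply: eq_bigr => j _; rewrite expnS mulnA.
rewrite !sh in e.
have e0 : a 0 = b 0.
  have := congr1 (modn^~ B) e; rewrite /= ![_ + B * _]addnC.
  by rewrite ![B * _]mulnC !modnMDl !modn_small.
move: e; rewrite e0 => /eqP; rewrite eqn_add2l eqn_mul2l eqn0Ngt B0 /= => /eqP e.
case: i => [//|i] lt; exact: (IH (fun j => a j.+1) (fun j => b j.+1)).
Qed.

Lemma sum_if (N p a b : nat) : p <= N ->
  \sum_(j < N) (if j < p then a else b) = p * a + (N - p) * b.
Proof.
move=> pN; rewrite -(big_mkord xpredT (fun j => if j < p then a else b)).
rewrite (big_cat_nat (leq0n p) pN) /=.
rewrite big_nat_cond (eq_bigr (fun=> a)); last by move=> j /andP[/andP[_ ->]].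
rewrite -big_nat_cond sum_nat_const_nat subn0; congr (_ + _); rewrite mulnC.
rewrite big_nat_cond (eq_bigr (fun=> b)); last by move=> j /andP[/andP[pj _] _]; rewrite ltnNge pj.
by rewrite -big_nat_cond sum_nat_const_nat mulnC.
Qed.

End NatStuff.
Section Constr.
Local Open Scope nat_scope.
Variables (gT : finGroupType) (G : {group gT}).
Definition mI := size (enum gT).
Definition Bb := (\sum_(A : {set gT}) 1).+1.
Definition Nn := Bb ^ mI.
Definition Ty : finType := ('I_mI * 'I_Nn * {set gT})%type.
Definition Cy (i : nat) : {group gT} := <[nth 1%g (enum gT) i]>%G.
Definition actv (a : Ty) := (a.1.2 < Bb ^ a.1.1) && (a.2 \in rcosets (Cy a.1.1) G).
Definition actf (a : Ty) (x : gT) : Ty :=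
  if (x \in G) && actv a then (a.1, a.2 :* x) else a.

Lemma rcosets_closed (H : {set gT}) A x : A \in rcosets H G -> x \in G -> A :* x \in rcosets H G.
Proof.
case/rcosetsP => y Gy -> Gx; apply/rcosetsP; exists (y * x)%g; rewrite ?groupM //.
by rewrite rcosetM.
Qed.

Lemma actv_closed a x : x \in G -> actv a -> actv (a.1, a.2 :* x).
Proof. by move=> Gx /andP[h ra]; rewrite /actv /= h rcosets_closed. Qed.

Lemma actf_is_action : is_action G actf.
Proof.
split.
  move=> x a b; rewrite /actf.
  case Gx: (x \in G) => /=; last by [].
  case ha: (actv a); case hb: (actv b) => //.
  - case: a b {ha hb} => [a1 a2] [b1 b2] /= [-> /rcoset_inj ->] //.
  - move=> E; move: hb; rewrite -E actv_closed //.
  - move=> E; move: ha; rewrite E actv_closed //.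
move=> a x y Gx Gy; rewrite /actf Gx Gy groupM //=.
case ha: (actv a) => /=; last by rewrite ha.
by rewrite actv_closed //= rcosetM.
Qed.

Definition to := Action actf_is_action.

Definition Fd (i : nat) (x : gT) :=
  \sum_(A : {set gT}) (if A \in rcosets (Cy i) G then nat_of_bool (A :* x == A) else 1).

Lemma Fd_lt i x : Fd i x < Bb.
Proof.
rewrite ltnS /Fd; apply: leq_sum => A _; case: ifP => //; by case: (_ == _).
Qed.

Lemma fix_count x : x \in G ->
  #|'Fix_to[x]| = \sum_(i < mI) Bb ^ i * Fd i x + \sum_(i < mI) (Nn - Bb ^ i) * (\sum_(A : {set gT}) 1).
Proof.
move=> Gx.
have -> : #|'Fix_to[x]| = \sum_(a : Ty) nat_of_bool (actf a x == a).
  rewrite -sum1_card big_mkcond /=; apply: eq_bigr => a _.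
  have -> : (a \in 'Fix_to[x]) = (actf a x == a) by apply/afix1P/eqP.
  by case: (_ == _).
rewrite -big_split /=.
rewrite (eq_bigr (fun a : Ty => nat_of_bool (actf (a.1, a.2) x == (a.1, a.2)))); last by case.
rewrite -(pair_bigA _ (fun ij A => nat_of_bool (actf (ij, A) x == (ij, A)))).
rewrite (eq_bigr (fun ij : 'I_mI * 'I_Nn => \sum_A nat_of_bool (actf ((ij.1, ij.2), A) x == ((ij.1, ij.2), A)))); last by case.
rewrite -(pair_bigA _ (fun i j => \sum_A nat_of_bool (actf ((i, j), A) x == ((i, j), A)))).
apply: eq_bigr => i _.
have -> : \sum_j \sum_A nat_of_bool (actf ((i, j), A) x == ((i, j), A)) =
          \sum_(j < Nn) (if j < Bb ^ i then Fd i x else \sum_(A : {set gT}) 1).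
  apply: eq_bigr => j _; rewrite /Fd; case: ifP => hj; apply: eq_bigr => A _;
    rewrite /actf /actv /= Gx hj /= ?eqxx //.
  by case: ifP => _; rewrite ?xpair_eqE ?eqxx.
rewrite sum_if //; rewrite /Nn leq_pexp2l //; exact: ltnW.
Qed.
End Constr.

Lemma Fd_lt2 (gT : finGroupType) (G : {group gT}) i w v :
  (forall A, A \in rcosets (Cy gT i) G -> A :* w != A) ->
  forall A0, A0 \in rcosets (Cy gT i) G -> A0 :* v == A0 -> (Fd G i w < Fd G i v)%N.
Proof.
move=> hw A0 rA0 fA0; rewrite /Fd (bigD1 A0) //= [X in (_ < X)%N](bigD1 A0) //=.
rewrite rA0 fA0 (negbTE (hw _ rA0)) add0n add1n ltnS.
apply: leq_sum => A _; case: ifP => // rA; rewrite (negbTE (hw _ rA)) //.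
Qed.

Lemma cyc_into (gT : finGroupType) (G : {group gT}) x y :
  x \in G -> y \in G ->
  Fd G (index x (enum gT)) x = Fd G (index x (enum gT)) y ->
  exists2 t, t \in G & y ^ t \in <[x]>.
Proof.
move=> Gx Gy e.
have DC : Cy gT (index x (enum gT)) = <[x]>%G.
  by apply: val_inj; rewrite /= nth_index // mem_enum.
have r1 : (<[x]> : {set gT}) \in rcosets (Cy gT (index x (enum gT))) G.
  by apply/rcosetsP; exists 1%g; rewrite ?group1 // DC mulg1.
have f1 : (<[x]> : {set gT}) :* x == <[x]> by rewrite rcoset_id ?cycle_id.
have : exists2 A, A \in rcosets (Cy gT (index x (enum gT))) G & A :* y == A.
  apply/exists_inP; apply: contraT => /exists_inPn hy.
  have := Fd_lt2 hy r1 f1; by rewrite e ltnn.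
case=> A /rcosetsP[t Gt ->]; rewrite DC /= -rcosetM => /eqP E.
exists t^-1; rewrite ?groupV //.
have : (t * y)%g \in <[x]> :* (t * y) by rewrite rcoset_refl.
by rewrite E mem_rcoset conjgE invgK mulgA.
Qed.

Lemma pc4 (gT : finGroupType) (G : {group gT}) : powclosed G ->
  exists (T : finType) (to : action G T),
         forall x y, x \in G -> y \in G ->
           #|'Fix_to[x]| = #|'Fix_to[y]| -> y \in x ^: G.
Proof.
move=> pc; exists (Ty gT), (to G) => x y Gx Gy e.
have dig : forall i, (i < mI gT)%N -> Fd G i x = Fd G i y.
  rewrite !fix_count // in e; move/addIn: e => e.
  exact: (digits (a := fun i => Fd G i x) (b := fun i => Fd G i y) (fun i => Fd_lt G i x) (fun i => Fd_lt G i y) e).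
have ix : (index x (enum gT) < mI gT)%N by rewrite /mI index_mem mem_enum.
have iy : (index y (enum gT) < mI gT)%N by rewrite /mI index_mem mem_enum.
have [t Gt yt] := cyc_into Gx Gy (dig _ ix).
have [s Gs xs] := cyc_into Gy Gx (esym (dig _ iy)).
exact: conj_core pc Gx Gy Gt yt Gs xs.
Qed.

Unset Implicit Arguments.
Set Strict Implicit.

Theorem theorem1p6 (gT : finGroupType) (G : {group gT}) (R : {set gT})
    (hR : is_transversal R (classes G) G) :
  [<-> rational_group G;
       separates_classes [seq perm_char G <[g]>%G | g <- enum R];
       exists Hs : seq {group gT},
         all (fun H : {group gT} => H \subset G) Hs /\
         separates_classes [seq perm_char G H | H <- Hs];
       exists (T : finType) (to : action G T),
         forall x y, x \in G -> y \in G ->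
           #|'Fix_to[x]| = #|'Fix_to[y]| -> y \in x ^: G].
Proof.
split; first exact: imp12.
split; first exact: imp23.
split; first by move/imp3pc/pc_rat/rat_pc/pc4.
by move/imp4pc/pc_rat.
Qed.
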